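(* Let $G$ be a finite graph and $D$ a divisor on $G$. Then $\bigoplus_{m=0}^\infty R(G,mD)$ is finitely generated as a graded semi-ring over ${\mathbb{Z}}^{\mathrm{trop}}$.
   Context: A finite graph $G$ is connected, loops and multiple edges allowed. A divisor is $D=\sum_{x\in V(G)}D(x)[x]$, $D(x)\in{\mathbb{Z}}$; effective if all $D(x)\ge0$. A rational function is $f:V(G)\to{\mathbb{Z}}$; $\mathrm{ord}_x(f)=\sum_{e=\overline{xy}\in E(G)}(f(y)-f(x))$, $\mathrm{div}(f)=\sum_x\mathrm{ord}_x(f)[x]$. $R(G,D)=\{f: D+\mathrm{div}(f)\ge0\}$. The direct sum $\bigoplus_m R(G,mD)$ is a graded semi-ring over ${\mathbb{Z}}^{\mathrm{trop}}=({\mathbb{Z}},\max,+)$ with sum $\max$ in each degree, action $c\odot f=c+f$, product $f\odot g=f+g$ (degrees add). Finitely generated means there are finitely many homogeneous elements such that every homogeneous element is a finite tropical sum of ${\mathbb{Z}}^{\mathrm{trop}}$-multiples of tropical products of them. *)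

(* Defs.v *)
From HB Require Import structures.
From mathcomp Require Import all_boot all_order all_algebra.
Set Implicit Arguments. Unset Strict Implicit. Unset Printing Implicit Defensive.
Import Order.TTheory GRing.Theory Num.Theory.
Local Open Scope ring_scope.

(* A finite graph (loops and multiple edges allowed) on the vertex set V is
   given by its edge-multiplicity function w : V -> V -> nat, which must be
   symmetric; w x y is the number of edges between x and y (w x x = number of
   loops at x). *)
Definition symmetric_mult (V : finType) (w : V -> V -> nat) : Prop :=
  forall x y, w x y = w y x.

Definition adj (V : finType) (w : V -> V -> nat) : rel V :=
  fun x y => (0 < w x y)%N.
Definition graph_connected (V : finType) (w : V -> V -> nat) : Prop :=
  forall x y : V, connect (adj w) x y.

Definition ord (V : finType) (w : V -> V -> nat) (f : V -> int) (x : V) : int :=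
  \sum_(y : V) (w x y)%:Z * (f y - f x).

Definition inR (V : finType) (w : V -> V -> nat) (D : V -> int) (f : V -> int)
  : Prop := forall x : V, 0 <= D x + ord w f x.

Definition mulDiv (V : finType) (m : nat) (D : V -> int) : V -> int :=
  fun x => m%:Z * D x.

Definition trop_sum (V : finType) (g : V -> int) (gs : seq (V -> int)) : V -> int :=
  foldr (fun h acc => fun x => Num.max (h x) (acc x)) g gs.

(* c (.) (g_{i1} (.) ... (.) g_{ir}) = c + g_{i1} + ... + g_{ir} *)
Definition trop_monomial (V : finType) (k : nat) (gen : 'I_k -> V -> int)
  (t : int * seq 'I_k) : V -> int :=
  fun x => t.1 + \sum_(i <- t.2) gen i x.

Definition mono_deg (k : nat) (deg : 'I_k -> nat) (t : int * seq 'I_k) : nat :=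
  (\sum_(i <- t.2) deg i)%N.

(* The graded semiring (+)_m R(G, mD) over Z^trop is finitely generated:
   finitely many homogeneous generators (deg i, gen i) with gen i in
   R(G, (deg i) D), such that every homogeneous element f of degree m is a
   finite (nonempty) tropical sum of Z^trop-multiples of tropical products of
   generators, each product having total degree m. *)
Definition section_ring_fg (V : finType) (w : V -> V -> nat) (D : V -> int)
  : Prop :=
  exists (k : nat) (deg : 'I_k -> nat) (gen : 'I_k -> V -> int),
    (forall i, inR w (mulDiv (deg i) D) (gen i)) /\
    forall (m : nat) (f : V -> int), inR w (mulDiv m D) f ->
      exists (t0 : int * seq 'I_k) (ts : seq (int * seq 'I_k)),
        (forall t, t \in t0 :: ts -> mono_deg deg t = m) /\
        f =1 trop_sum (trop_monomial gen t0) (map (trop_monomial gen) ts).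

(* Main.v *)
Require Import Defs.
From mathcomp Require Import all_boot all_order all_algebra.
From mathcomp Require Import ring lra zify.
From Stdlib Require Import Classical FunctionalExtensionality.
Import Order.TTheory GRing.Theory Num.Theory.

Definition lev (n : nat) (f g : nat -> nat) : Prop :=
  forall i, (i < n)%N -> (f i <= g i)%N.
Definition vcons (a : nat) (v : nat -> nat) : nat -> nat :=
  fun i => if i is j.+1 then v j else a.
Definition vtail (f : nat -> nat) : nat -> nat := fun i => f i.+1.

Lemma vcons_eta f : vcons (f 0%N) (vtail f) = f.
Proof. by apply: functional_extensionality => -[|i]. Qed.

Lemma lev_cons n a b v u : (a <= b)%N -> lev n v u -> lev n.+1 (vcons a v) (vcons b u).
Proof. by move=> hab hvu [|i] //= hi; apply: hvu. Qed.

Definition basis (A : (nat -> nat) -> Prop) (Rel : (nat -> nat) -> (nat -> nat) -> Prop)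
  (S : (nat -> nat) -> Prop) (k : nat) (L : nat -> nat -> nat) : Prop :=
  (forall j, (j < k)%N -> A (L j)) /\ forall f, S f -> exists2 j, (j < k)%N & Rel (L j) f.

Lemma merge2 A Rel S1 S2 :
  (exists k L, basis A Rel S1 k L) -> (exists k L, basis A Rel S2 k L) ->
  exists k L, basis A Rel (fun f => S1 f \/ S2 f) k L.
Proof.
move=> [k1 [L1 [A1 B1]]] [k2 [L2 [A2 B2]]].
exists (k1 + k2)%N, (fun j => if (j < k1)%N then L1 j else L2 (j - k1)%N); split.
  move=> j hj; case: ifP => h; first by apply: A1.
  apply: A2; lia.
move=> f [/B1 [j hj R]|/B2 [j hj R]].
  by exists j; [lia| rewrite hj].
exists (k1 + j)%N; first lia.
by rewrite ifF ?addKn //; lia.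
Qed.

Lemma combine (c : nat) A Rel (S : nat -> (nat -> nat) -> Prop) :
  (forall k, (k < c)%N -> exists kk L, basis A Rel (S k) kk L) ->
  exists kk L, basis A Rel (fun f => exists2 k, (k < c)%N & S k f) kk L.
Proof.
elim: c => [|c IH] H.
  exists 0%N, (fun _ _ => 0%N); split=> // f [k] //.
have [kk [L [HA HB]]] : exists kk L, basis A Rel
   (fun f => (exists2 k, (k < c)%N & S k f) \/ S c f) kk L.
  apply: merge2; first by apply: IH => k hk; apply: H; lia.
  by apply: H.
exists kk, L; split=> // f [k hk Sf].
apply: HB; case: (ltnP k c) => h; first by left; exists k.
have ekc : k = c by lia.
by right; rewrite -ekc.
Qed.

Lemma fin_choice (k : nat) (P : nat -> nat -> Prop) :
  (forall j, (j < k)%N -> exists a, P j a) -> exists h, forall j, (j < k)%N -> P j (h j).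
Proof.
elim: k => [|k IH] H; first by exists (fun _ => 0%N).
have [h hh] := IH (fun j hj => H j (ltnW hj)).
have [a Pa] := H k (ltnSn k).
exists (fun j => if j == k then a else h j) => j hj.
case: eqP => [->//|ne]; apply: hh; lia.
Qed.

Lemma fin_bound (k : nat) (h : nat -> nat) : exists c, forall j, (j < k)%N -> (h j <= c)%N.
Proof.
elim: k => [|k [c hc]]; first by exists 0%N.
exists (maxn c (h k)) => j hj.
case: (ltnP j k) => h1; first by rewrite leq_max hc.
have -> : j = k by lia.
by rewrite leq_max leqnn orbT.
Qed.

Lemma fbp n : forall A : (nat -> nat) -> Prop,
  exists k L, basis A (lev n) A k L.
Proof.
elim: n => [|n IH] A.
  case: (classic (exists f, A f)) => [[f Af]|nA].
    exists 1%N, (fun _ => f); split=> [j _|g _] //. by exists 0%N.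
  exists 0%N, (fun _ _ => 0%N); split=> [j //|g Ag]. by case: nA; exists g.
pose B v := exists a, A (vcons a v).
have [kB [LB [LBA LBb]]] := IH B.
have [h hA] := @fin_choice kB (fun j a => A (vcons a (LB j))) LBA.
have [c hc] := fin_bound kB h.
have [kk [L [HA HB]]] : exists kk L, basis A (lev n.+1)
   (fun f => (A f /\ (c <= f 0%N)%N) \/ (exists2 k, (k < c)%N & A f /\ f 0%N = k)) kk L.
  apply: merge2.
    exists kB, (fun j => vcons (h j) (LB j)); split; first by move=> j hj; apply: hA.
    move=> f [Af cf].
    have : B (vtail f) by exists (f 0%N); rewrite vcons_eta.
    move=> /LBb [j hj lj]; exists j => //.
    rewrite -(vcons_eta f); apply: lev_cons => //.
    exact: leq_trans (hc j hj) cf.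
  apply: combine => k hk.
  have [kk [L [LA LB']]] := IH (fun v => A (vcons k v)).
  exists kk, (fun j => vcons k (L j)); split; first by move=> j hj; apply: LA.
  move=> f [Af fk].
  have : A (vcons k (vtail f)) by rewrite -fk vcons_eta.
  move=> /LB' [j hj lj]; exists j => //.
  by rewrite -(vcons_eta f) fk; apply: lev_cons.
exists kk, L; split => // f Af.
apply: HB; case: (leqP c (f 0%N)) => h1; first by left.
by right; exists (f 0%N).
Qed.

Lemma generation n (P : (nat -> nat) -> Prop) :
  (forall x y, P x -> P y -> lev n y x -> P (fun i => x i - y i)%N) ->
  exists k (L : 'I_k -> nat -> nat), (forall j, P (L j)) /\
   forall x, P x -> exists s : seq 'I_k, forall i, (i < n)%N -> x i = (\sum_(j <- s) L j i)%N.
Proof.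
move=> Psub.
have [k [L [LA Lb]]] := fbp n (fun x => P x /\ (0 < \sum_(i < n) x i)%N).
exists k, (fun j : 'I_k => L j); split=> [j|x Px]; first by case: (LA j (ltn_ord j)).
move: {2}(\sum_(i < n) x i)%N (leqnn (\sum_(i < n) x i)%N) => t.
elim: t x Px => [|t IHt] x Px hx.
  exists [::] => i hi; rewrite big_nil.
  by move: hx; rewrite leqn0 sum_nat_eq0 => /forallP /(_ (Ordinal hi)) /= /eqP.
case: (posnP (\sum_(i < n) x i)%N) => [z|pos].
  exists [::] => i hi; rewrite big_nil.
  by move/eqP: z; rewrite sum_nat_eq0 => /forallP /(_ (Ordinal hi)) /= /eqP.
have [j hj lj] := Lb x (conj Px pos).
have [Pj posj] := LA j hj.
have Pd := Psub x (L j) Px Pj lj.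
have esum : (\sum_(i < n) (x i - L j i) + \sum_(i < n) L j i = \sum_(i < n) x i)%N.
  rewrite -big_split /=; apply: eq_bigr => i _; rewrite subnK //; exact: lj.
have [s hs] := IHt _ Pd ltac:(lia).
exists (Ordinal hj :: s) => i hi; rewrite big_cons /= -hs //.
by rewrite subnKC //; apply: lj.
Qed.

Local Open Scope ring_scope.

Lemma ord_shift (V : finType) (w : V -> V -> nat) (f g : V -> int) (c : int) x :
  (forall y, g y = f y + c) -> ord w g x = ord w f x.
Proof.
move=> H; rewrite /ord; apply: eq_bigr => y _; rewrite !H; congr (_ * _); ring.
Qed.

Lemma ord_sub (V : finType) (w : V -> V -> nat) (f g : V -> int) x :
  ord w (fun y => f y - g y) x = ord w f x - ord w g x.
Proof.
rewrite /ord -sumrB; apply: eq_bigr => y _; ring.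
Qed.

Lemma Posz_sum (I : Type) (s : seq I) (F : I -> nat) :
  ((\sum_(i <- s) F i)%N)%:Z = \sum_(i <- s) (F i)%:Z.
Proof.
elim: s => [|a s IH]; first by rewrite !big_nil.
by rewrite !big_cons PoszD IH.
Qed.

Theorem theorem3p7 (V : finType) (w : V -> V -> nat) (D : V -> int) :
  symmetric_mult w -> graph_connected w -> section_ring_fg w D.
Proof.
move=> _ _.
pose e := enum V; pose n := size e; pose idx x := index x e.
have idxn : forall x, (idx x < n)%N by move=> x; rewrite /idx /n index_mem mem_enum.
pose P (g : nat -> nat) := forall x : V,
  (g (1 + n + idx x)%N)%:Z = mulDiv (g 0%N) D x + ord w (fun y => (g (1 + idx y)%N)%:Z) x.
have Psub : forall x y, P x -> P y -> lev (1 + n + n) y x -> P (fun i => x i - y i)%N.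
  move=> x y Px Py lyx v.
  have h0 : (y 0%N <= x 0%N)%N by apply: lyx; lia.
  have h1 : (y (1 + n + idx v) <= x (1 + n + idx v))%N by apply: lyx; have := idxn v; lia.
  rewrite /= -!subzn // Px Py /mulDiv.
  rewrite (@ord_shift _ _ (fun z => (x (1 + idx z)%N)%:Z - (y (1 + idx z)%N)%:Z)
     (fun z => ((x (1 + idx z) - y (1 + idx z))%N)%:Z) 0).
    rewrite ord_sub -subzn //; ring.
  move=> z; rewrite addr0 -subzn //; apply: lyx; have := idxn z; lia.
have [k [L [LP Lgen]]] := @generation (1 + n + n) P Psub.
exists k, (fun j => L j 0%N), (fun j x => (L j (1 + idx x)%N)%:Z); split.
  move=> j x; rewrite /inR -LP; done.
move=> m f hf.
pose c : int := - \sum_(v : V) `|f v|.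
have hc : forall v, 0 <= f v - c.
  move=> v; rewrite /c opprK.
  have h1 : `|f v| <= \sum_(u : V) `|f u|.
    rewrite (bigD1 v) //= lerDl; apply: sumr_ge0 => u _; exact: normr_ge0.
  have h2 : - f v <= `|f v| by rewrite -normrN ler_norm.
  lia.
pose x : nat -> nat := nth 0%N (m :: map (fun v => absz (f v - c)) e
     ++ map (fun v => absz (mulDiv m D v + ord w f v)) e).
have x1 : forall v, x (1 + idx v)%N = absz (f v - c).
  move=> v; rewrite /x add1n /= nth_cat size_map -/n idxn (nth_map v) ?idxn //.
  by rewrite /idx nth_index // mem_enum.
have x2 : forall v, x (1 + n + idx v)%N = absz (mulDiv m D v + ord w f v).
  move=> v; rewrite /x -addnA add1n /= nth_cat size_map -/n ltnNge leq_addr /= addKn.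
  rewrite (nth_map v) ?idxn //.
  by rewrite /idx nth_index // mem_enum.
have Px : P x.
  move=> v; rewrite x2 gez0_abs; last exact: hf.
  have -> : x 0%N = m by [].
  congr (_ + _); symmetry; apply: (@ord_shift _ _ f _ (- c)) => y.
  by rewrite x1 gez0_abs ?hc.
have [s hs] := Lgen x Px.
exists (c, s), [::]; split.
  move=> t; rewrite inE => /eqP -> /=; rewrite /mono_deg /=.
  by rewrite -(hs 0%N) //; lia.
move=> v /=; rewrite /trop_monomial /=.
have := hs (1 + idx v)%N ltac:(have := idxn v; lia).
rewrite x1 => /(congr1 Posz); rewrite gez0_abs ?hc // Posz_sum => <-.
by rewrite [RHS]addrC subrK.
Qed.
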